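(* Let $k\geq 0$ and let $i,j$ be integers with $k+2\leq i,j\leq 2k+2$. Then $R_k^{\mathcal{CO}}(i,j)=i+j-k-2$, where $\mathcal{CO}$ is the class of cographs.
   Context: All graphs are finite and simple. For a graph $G$ and a nonnegative integer $k$, a $k$-sparse $j$-set is a set of $j$ vertices of $G$ inducing a subgraph of maximum degree at most $k$; a $k$-dense $i$-set is a set of $i$ vertices of $G$ that is $k$-sparse in the complement of $G$. For a graph class $\mathcal{G}$, $R_k^{\mathcal{G}}(i,j)$ is the smallest natural number $n$ such that every graph on $n$ vertices in $\mathcal{G}$ has either a $k$-dense $i$-set or a $k$-sparse $j$-set. A cograph is a graph containing no induced path on four vertices. *)

(* Defs.v *)
From mathcomp Require Import all_boot.
Set Implicit Arguments. Unset Strict Implicit. Unset Printing Implicit Defensive.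

Definition simple_graph (T : finType) (e : rel T) : Prop :=
  symmetric e /\ irreflexive e.

Definition compl_rel (T : finType) (e : rel T) : rel T :=
  fun x y => (x != y) && ~~ e x y.

Definition max_deg_le (T : finType) (e : rel T) (k : nat) (S : {set T}) : bool :=
  [forall x in S, #|[set y in S | e x y]| <= k].

Definition sparse_set (T : finType) (e : rel T) (k j : nat) (S : {set T}) : Prop :=
  #|S| = j /\ max_deg_le e k S.

Definition dense_set (T : finType) (e : rel T) (k i : nat) (S : {set T}) : Prop :=
  #|S| = i /\ max_deg_le (compl_rel e) k S.

Definition is_cograph (T : finType) (e : rel T) : Prop :=
  ~ exists a b c d : T,
      [/\ uniq [:: a; b; c; d],
          e a b && e b c && e c d &
          ~~ e a c && ~~ e b d && ~~ e a d].

Definition co_ramsey_prop (k i j n : nat) : Prop :=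
  forall e : rel 'I_n, simple_graph e -> is_cograph e ->
    exists S : {set 'I_n}, dense_set e k i S \/ sparse_set e k j S.

Definition is_co_ramsey (k i j N : nat) : Prop :=
  co_ramsey_prop k i j N /\ forall m, m < N -> ~ co_ramsey_prop k i j m.

(* Main.v *)
Require Import Defs.
From mathcomp Require Import all_boot zify.
Set Implicit Arguments. Unset Strict Implicit. Unset Printing Implicit Defensive.

Section Helpers.
Variable T : finType.
Implicit Types (e : rel T) (S U A B : {set T}).

Lemma maxdeg_sub e k S1 S2 : S2 \subset S1 -> max_deg_le e k S1 -> max_deg_le e k S2.
Proof.
move=> sub /forall_inP H; apply/forall_inP => x xS2.
apply: leq_trans (H x (subsetP sub x xS2)); apply: subset_leq_card.
apply/subsetP => y; rewrite !inE => /andP[yS ey]; by rewrite (subsetP sub y yS) ey.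
Qed.

Lemma maxdeg_small e k S : irreflexive e -> #|S| <= k.+1 -> max_deg_le e k S.
Proof.
move=> irr hS; apply/forall_inP => x xS.
have : #|[set y in S | e x y]| <= #|S :\ x|.
  apply: subset_leq_card; apply/subsetP => y; rewrite !inE => /andP[yS ey].
  rewrite yS andbT; apply/eqP => yx; by rewrite yx irr in ey.
move: hS; rewrite (cardsD1 x S) xS; lia.
Qed.

Lemma maxdeg_ext (r1 r2 : rel T) k S : (forall x y, r1 x y = r2 x y) ->
  max_deg_le r1 k S -> max_deg_le r2 k S.
Proof.
move=> H /forall_inP H1; apply/forall_inP => x xS.
have -> : [set y in S | r2 x y] = [set y in S | r1 x y] by apply/setP => y; rewrite !inE H.
exact: H1.
Qed.

Lemma compl_compl e : irreflexive e -> forall x y, compl_rel (compl_rel e) x y = e x y.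
Proof.
move=> irr x y; rewrite /compl_rel; case: (eqVneq x y) => [->|] /=; first by rewrite irr.
by rewrite negbK.
Qed.


Lemma compl_simple2 e : simple_graph e -> simple_graph (compl_rel e).
Proof. move=> [sy _]; split; first by move=> x y; rewrite /compl_rel eq_sym sy. by move=> x; rewrite /compl_rel eqxx. Qed.

Lemma compl_cograph e : simple_graph e -> is_cograph e -> is_cograph (compl_rel e).
Proof.
move=> [sy irr] cg [a [b [c [d [u /andP[/andP[ab bc] cd] /andP[/andP[ac bd] ad]]]]]].
apply: cg; exists c, a, d, b.
move: u; rewrite /= !inE ?negb_or => /and4P[/and3P[nab nac nad] /andP[nbc nbd] ncd _].
split.
  by rewrite /= eq_sym nac ncd eq_sym nbc nad nab eq_sym nbd.
- move: ac ad bd; rewrite /compl_rel nac nad nbd /= !negbK => ac ad bd.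
  by rewrite (sy c a) ac ad (sy d b) bd.
- move: ab bc cd; rewrite /compl_rel nab nbc ncd /= => ab bc cd.
  by rewrite cd ab (sy c b) bc.
Qed.

Lemma exists_sub S m : m <= #|S| -> exists2 S' : {set T}, S' \subset S & #|S'| = m.
Proof.
move=> hm; have [d hd] : exists d, #|S| = m + d by exists (#|S| - m); lia.
elim: d S hd {hm} => [|d IH] S hS; first by exists S => //; rewrite hS addn0.
have : 0 < #|S| by rewrite hS; lia.
case/card_gt0P => x xS.
have [S' sub cS'] : exists2 S' : {set T}, S' \subset S :\ x & #|S'| = m.
  apply: IH; move: hS; rewrite (cardsD1 x S) xS; lia.
exists S' => //; apply: subset_trans sub (subsetDl _ _).
Qed.

Lemma union_sparse e k A B S1 S2 : symmetric e ->
  (forall x y, x \in B -> y \in A -> e x y = false) ->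
  A :&: B = set0 -> S1 \subset B -> S2 \subset A ->
  max_deg_le e k S1 -> max_deg_le e k S2 ->
  max_deg_le e k (S1 :|: S2) /\ #|S1 :|: S2| = #|S1| + #|S2|.
Proof.
move=> sy cr dis s1 s2 /forall_inP h1 /forall_inP h2; split; last first.
  rewrite -cardsUI.
  suff -> : S1 :&: S2 = set0 by rewrite cards0 addn0.
  apply/setP => y; rewrite !inE; apply/negP => /andP[y1 y2].
  have : y \in A :&: B by rewrite inE (subsetP s2 y y2) (subsetP s1 y y1).
  by rewrite dis inE.
apply/forall_inP => x; rewrite inE => /orP[xS|xS].
  apply: leq_trans (h1 x xS); apply: subset_leq_card; apply/subsetP => y.
  rewrite !inE => /andP[/orP[->//|yS] exy].
  by rewrite cr in exy => //; [exact: (subsetP s1) | exact: (subsetP s2)].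
apply: leq_trans (h2 x xS); apply: subset_leq_card; apply/subsetP => y.
rewrite !inE => /andP[/orP[yS|->//] exy].
by rewrite sy cr in exy => //; [exact: (subsetP s1) | exact: (subsetP s2)].
Qed.


Definition homog e U A (bb : bool) := forall x y, x \in A -> y \in U :\: A -> e x y = bb.

Definition has_part e U := exists A bb, [/\ A \subset U, A != set0, U :\: A != set0 & homog e U A bb].

Lemma p4 e a b c d : is_cograph e -> a != b -> a != c -> a != d -> b != c -> b != d -> c != d ->
  e a b -> e b c -> e c d -> ~~ e a c -> ~~ e b d -> ~~ e a d -> False.
Proof.
move=> cg ab ac ad bc bd cd eab ebc ecd nac nbd nad; apply: cg; exists a, b, c, d; split.
- by rewrite /= !inE !negb_or ab ac ad bc bd cd.
- by rewrite eab ebc ecd.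
- by rewrite nac nbd nad.
Qed.

Lemma part_step e U v A' : simple_graph e -> is_cograph e -> v \in U ->
  A' \subset U :\ v -> A' != set0 -> (U :\ v) :\: A' != set0 -> homog e (U :\ v) A' false ->
  has_part e U.
Proof.
move=> [sy irr] cg vU sA nA nB hom.
have sU : U :\ v \subset U by exact: subsetDl.
have vA : v \notin A' by apply/negP => /(subsetP sA); rewrite !inE eqxx.
case: (boolP [exists x in A', e v x]) => hA; last first.
  exists A', false; split => //.
  - exact: subset_trans sA sU.
  - by apply/set0Pn; exists v; rewrite inE vA vU.
  move=> x y xA; rewrite inE => /andP[yA yU].
  case: (eqVneq y v) => [->|yv]; last by apply: hom => //; rewrite !inE yA yv yU.
  rewrite sy; apply/negbTE; apply: contra hA => evx; apply/exists_inP; by exists x.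
case/exists_inP: hA => x1 x1A ev1.
case: (boolP [exists w in (U :\ v) :\: A', e v w]) => hB; last first.
  exists ((U :\ v) :\: A'), false; split => //.
  - exact: subset_trans (subsetDl _ _) sU.
  - by apply/set0Pn; exists v; rewrite !inE eqxx /= andbF vU.
  move=> x y xB; rewrite inE => /andP[yB yU].
  case: (eqVneq y v) => [->|yv].
    rewrite sy; apply/negbTE; apply: contra hB => evx; apply/exists_inP; by exists x.
  rewrite sy; apply: hom => //.
  by move: yB; rewrite !inE yv yU /= andbT negbK.
case/exists_inP: hB => w wB evw.
have wA : w \notin A' by move: wB; rewrite inE => /andP[].
have wv : w != v by move: wB; rewrite !inE => /andP[_ /andP[]].
set M := [set y in U :\ v | ~~ e v y].
case: (eqVneq M set0) => [M0|Mn].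
  exists [set v], true; split.
  - by rewrite sub1set.
  - by apply/set0Pn; exists v; rewrite inE.
  - apply/set0Pn; exists x1; rewrite !inE.
    have := subsetP sA x1 x1A; rewrite !inE => /andP[-> ->]; by [].
  move=> x y; rewrite inE => /eqP ->; rewrite !inE => /andP[yv yU].
  apply/negbNE; apply/negP => nvy.
  have : y \in M by rewrite inE !inE yv yU.
  by rewrite M0 inE.
exists M, false; split.
- apply/subsetP => y; rewrite inE => /andP[/(subsetP sU) // _].
- exact: Mn.
- by apply/set0Pn; exists v; rewrite !inE vU eqxx.
move=> x y; rewrite !inE => /andP[/andP[xv xU] nvx] /andP[yM yU].
case: (eqVneq y v) => [->|yv]; first by rewrite sy; apply/negbTE.
move: yM; rewrite yv yU /= negbK => evy.
apply/negbTE/negP => exy.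
have xy : x != y by apply/negP => /eqP xy; rewrite xy irr in exy.
have xU' : x \in U :\ v by rewrite !inE xv xU.
have yU' : y \in U :\ v by rewrite !inE yv yU.
case: (boolP (x \in A')) => xA.
  have yA : y \in A'.
    apply/negPn/negP => yA; have : e x y = false by apply: hom => //; rewrite inE yA yU'.
    by rewrite exy.
  have exw : e x w = false by apply: hom.
  have eyw : e y w = false by apply: hom.
  apply: (@p4 e x y v w cg xy xv) => //.
  - by apply/negP => /eqP xw; rewrite -xw xA in wA.
  - by apply/negP => /eqP yw; rewrite -yw yA in wA.
  - by rewrite eq_sym.
  - by rewrite sy.
  - by rewrite sy.
  - by rewrite eyw.
  - by rewrite exw.
have xB : x \in (U :\ v) :\: A' by rewrite inE xA xU'.
have yB : y \notin A'.
  apply/negP => yA; have := hom y x yA xB; by rewrite sy exy.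
have yB' : y \in (U :\ v) :\: A' by rewrite inE yB yU'.
have ex1 : e x x1 = false by rewrite sy; apply: hom.
have ey1 : e y x1 = false by rewrite sy; apply: hom.
have x1v : x1 != v by have := subsetP sA x1 x1A; rewrite !inE => /andP[].
apply: (@p4 e x y v x1 cg xy xv) => //.
- by apply/negP => /eqP xw; rewrite xw x1A in xA.
- by apply/negP => /eqP yw; rewrite yw x1A in yB.
- by rewrite eq_sym.
- by rewrite sy.
- by rewrite sy.
- by rewrite ey1.
- by rewrite ex1.
Qed.

Lemma part_compl e U : has_part (compl_rel e) U -> has_part e U.
Proof.
case=> A [bb [sA nA nB hom]]; exists A, (~~ bb); split => // x y xA yB.
have := hom x y xA yB; rewrite /compl_rel.
have xy : x != y by apply/eqP => xy; move: yB; rewrite inE -xy xA.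
by rewrite xy /= => <-; rewrite negbK.
Qed.

Lemma partition n : forall e U, simple_graph e -> is_cograph e -> #|U| <= n -> 1 < #|U| -> has_part e U.
Proof.
elim: n => [|n IH] e U sg cg hn h2; first lia.
have : 0 < #|U| by lia.
case/card_gt0P => v vU.
have cU' : #|U| = (#|U :\ v|).+1 by rewrite (cardsD1 v U) vU.
case: (leqP #|U :\ v| 1) => h1.
  have /cards1P [w Uw] : #|U :\ v| == 1 by apply/eqP; lia.
  exists [set v], (e v w); split.
  - by rewrite sub1set.
  - by apply/set0Pn; exists v; rewrite inE.
  - by apply/set0Pn; exists w; rewrite Uw inE.
  by move=> x y; rewrite inE => /eqP ->; rewrite Uw inE => /eqP ->.
have [A' [bb [sA nA nB hom]]] := IH e (U :\ v) sg cg ltac:(lia) h1.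
case: bb hom => hom.
  apply: part_compl; apply: (@part_step (compl_rel e) U v A') => //.
  - exact: compl_simple2.
  - exact: compl_cograph.
  move=> x y xA yB; rewrite /compl_rel hom //.
  by rewrite andbF.
exact: (@part_step e U v A').
Qed.

Definition good e k a b U := exists S : {set T}, S \subset U /\
  ((#|S| = a /\ max_deg_le (compl_rel e) k S) \/ (#|S| = b /\ max_deg_le e k S)).

Lemma good_compl e k a b U : irreflexive e -> good (compl_rel e) k b a U -> good e k a b U.
Proof.
move=> irr [S [sS [[c d]|[c d]]]]; exists S; split => //.
  right; split => //; apply: maxdeg_ext d; exact: compl_compl.
by left.
Qed.

Lemma finish_union e k a b U A B S1 S2 : simple_graph e ->
  (forall x y, x \in B -> y \in A -> e x y = false) ->
  A :&: B = set0 -> A \subset U -> B \subset U -> S1 \subset B -> S2 \subset A ->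
  max_deg_le e k S1 -> max_deg_le e k S2 -> #|S1| + #|S2| = b -> good e k a b U.
Proof.
move=> [sy irr] cr dis sAU sBU s1 s2 m1 m2 cb.
have [m c] := union_sparse sy cr dis s1 s2 m1 m2.
exists (S1 :|: S2); split; last by right; split => //; rewrite c.
by rewrite subUset (subset_trans s1 sBU) (subset_trans s2 sAU).
Qed.

Lemma small_case e k U A B a b : simple_graph e -> B \subset U -> A \subset U ->
  A :&: B = set0 -> #|A| + #|B| = #|U| ->
  (forall x y, x \in B -> y \in A -> e x y = false) -> 0 < #|B| <= k ->
  (forall b', k+2 <= b' <= 2*k+2 -> a + b' <= #|A| + k + 2 -> good e k a b' A) ->
  k+2 <= a <= 2*k+2 -> k+2 <= b <= 2*k+2 -> a + b <= #|U| + k + 2 -> good e k a b U.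
Proof.
move=> sg sBU sAU dis cU cr hB IHA ha hb hab.
have [sy irr] := sg.
have mB : max_deg_le e k B by apply: maxdeg_small => //; lia.
case: (leqP (k+2) (b - #|B|)) => hb'.
  have [S [sSA [[cS dS]|[cS sS]]]] := IHA (b - #|B|) ltac:(lia) ltac:(lia).
    exists S; split; [exact: subset_trans sSA sAU | by left].
  apply: (@finish_union e k a b U A B B S) => //; lia.
have [S2 sS2 cS2] := @exists_sub A (b - #|B|) ltac:(lia).
apply: (@finish_union e k a b U A B B S2) => //; last by lia.
apply: maxdeg_small => //; lia.
Qed.

Lemma DU e k U B a b : simple_graph e -> B \subset U -> B != set0 -> U :\: B != set0 ->
  homog e U B false ->
  (forall U' a' b', #|U'| < #|U| -> k+2 <= a' <= 2*k+2 -> k+2 <= b' <= 2*k+2 ->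
     a' + b' <= #|U'| + k + 2 -> good e k a' b' U') ->
  k+2 <= a <= 2*k+2 -> k+2 <= b <= 2*k+2 -> a + b <= #|U| + k + 2 -> good e k a b U.
Proof.
move=> sg sBU nB nA hom IH ha hb hab.
have [sy irr] := sg.
set A := U :\: B.
have sAU : A \subset U by exact: subsetDl.
have dis : A :&: B = set0.
  apply/setP => y; rewrite !inE; by case: (y \in B); rewrite ?andbF.
have cU : #|A| + #|B| = #|U|.
  by rewrite -(cardsID B U) (setIidPr sBU) addnC.
have crBA : forall x y, x \in B -> y \in A -> e x y = false by move=> x y; exact: hom.
have crAB : forall x y, x \in A -> y \in B -> e x y = false by move=> x y xA yB; rewrite sy; exact: hom.
have pB : 0 < #|B| by rewrite card_gt0.
have pA : 0 < #|A| by rewrite card_gt0.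
case: (leqP #|B| k) => hBk.
  apply: (@small_case e k U A B) => //; first lia.
  move=> b' hb' hab'; apply: IH => //; lia.
case: (leqP #|A| k) => hAk.
  apply: (@small_case e k U B A) => //.
  - by rewrite setIC.
  - by rewrite addnC.
  - lia.
  move=> b' hb' hab'; apply: IH => //; lia.
have [S1 s1 c1] := @exists_sub B k.+1 ltac:(lia).
have [S2 s2 c2] := @exists_sub A (b - k.+1) ltac:(lia).
apply: (@finish_union e k a b U A B S1 S2) => //; try lia;
  apply: maxdeg_small => //; lia.
Qed.

Lemma main k n : forall e U a b, simple_graph e -> is_cograph e -> #|U| <= n ->
  k+2 <= a <= 2*k+2 -> k+2 <= b <= 2*k+2 -> a + b <= #|U| + k + 2 -> good e k a b U.
Proof.
elim: n => [|n IH] e U a b sg cg hn ha hb hab; first lia.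
have [sy irr] := sg.
have [A [bb [sA nA nB hom]]] := @partition #|U| e U sg cg (leqnn _) ltac:(lia).
case: bb hom => hom.
  apply: good_compl => //.
  apply: (@DU (compl_rel e) k U A) => //.
  - exact: compl_simple2.
  - move=> x y xA yB; rewrite /compl_rel hom // andbF //.
  move=> U' a' b' hU' ha' hb' hab'; apply: IH => //.
  - exact: compl_simple2.
  - exact: compl_cograph.
  - lia.
  by rewrite addnC.
apply: (@DU e k U A) => //.
move=> U' a' b' hU' ha' hb' hab'; apply: IH => //; lia.
Qed.

End Helpers.

Lemma card_range m (A : {set 'I_m}) lo len :
  (forall x, x \in A -> lo <= x < lo + len) -> #|A| <= len.
Proof.
move=> H.
have -> : #|A| = size (map val (enum A)) by rewrite size_map cardE.
rewrite -(size_iota lo len); apply: uniq_leq_size.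
  rewrite map_inj_uniq ?enum_uniq //; exact: val_inj.
move=> y /mapP [x]; rewrite mem_enum => xA ->; rewrite mem_iota; exact: H.
Qed.

Definition lowg (m c : nat) : rel 'I_m := fun x y => (x != y) && (x < c) && (y < c).

Lemma lower k i j m : k+2 <= i -> k+2 <= j -> m < i+j-k-2 -> ~ co_ramsey_prop k i j m.
Proof.
move=> hi hj hm H.
have sg : simple_graph (@lowg m (i-1)).
  split; last by move=> x; rewrite /lowg eqxx.
  move=> x y; rewrite /lowg eq_sym; case: (x < i-1); case: (y < i-1); by rewrite ?andbF ?andbT.
have cg : is_cograph (@lowg m (i-1)).
  move=> [a [b [c [d [u /andP[/andP[ab bc] cd] /andP[/andP[ac bd] ad]]]]]].
  have ac' : a != c by move: u; rewrite /= !inE; case: (a == c); rewrite ?orbT.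
  move/andP: ab => [/andP[_ ha] _]; move/andP: bc => [_ hc].
  by move: ac; rewrite /lowg ac' ha hc.
have [S [[cS dS]|[cS sS]]] := H _ sg cg.
  have : ~~ (S \subset [set x : 'I_m | x < i-1]).
    apply/negP => sub; have := subset_leq_card sub.
    have := @card_range m [set x : 'I_m | x < i-1] 0 (i-1).
    rewrite cS => h; have := h (fun x => ltac:(by rewrite inE add0n)); move=> h1 h2; have := leq_trans h2 h1; lia.
  case/subsetPn => v vS; rewrite inE => nv.
  have := forall_inP dS v vS.
  have : #|S :\ v| <= #|[set y in S | compl_rel (@lowg m (i-1)) v y]|.
    apply: subset_leq_card; apply/subsetP => y; rewrite !inE => /andP[yv yS].
    by rewrite yS /compl_rel /lowg eq_sym yv (negbTE nv) //.
  move=> h1 h2; have := leq_trans h1 h2; move: cS; rewrite (cardsD1 v S) vS; lia.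
set B := [set x : 'I_m | x < i-1].
have cSB := cardsID B S.
have hD : #|S :\: B| <= m - (i-1).
  apply: (@card_range m _ (i-1)) => x; rewrite !inE => /andP[nx _].
  have := ltn_ord x; move: nx; rewrite -leqNgt; lia.
have hC : #|S :&: B| <= k.+1.
  case: (boolP (S :&: B == set0)) => [/eqP->|]; first by rewrite cards0.
  case/set0Pn => x; rewrite !inE => /andP[xS xB].
  have := forall_inP sS x xS.
  have : #|(S :&: B) :\ x| <= #|[set y in S | @lowg m (i-1) x y]|.
    apply: subset_leq_card; apply/subsetP => y; rewrite !inE => /andP[yx /andP[yS yB]].
    by rewrite yS /lowg eq_sym yx xB yB.
  rewrite (cardsD1 x (S :&: B)) !inE xS xB; move=> h1 h2; have := leq_trans h1 h2; lia.
have := leq_add hC hD; rewrite cSB cS; lia.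
Qed.

Theorem lemma7p2 (k i j : nat) :
  k + 2 <= i <= 2 * k + 2 -> k + 2 <= j <= 2 * k + 2 ->
  is_co_ramsey k i j (i + j - k - 2).
Proof.
move=> hi hj; split; last by move=> m hm; apply: lower; lia.
move=> e sg cg.
have [S [_ [[c d]|[c d]]]] := @main _ k (i+j-k-2) e setT i j sg cg
  ltac:(by rewrite cardsT card_ord) hi hj ltac:(rewrite cardsT card_ord; lia).
  by exists S; left.
by exists S; right.
Qed.
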